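(* Let $M$ be the blow-up of $\mathbb{CP}_2$ at three non-collinear points, with Kähler cone $\mathcal K$. Then $\mathcal B(\Omega)<\tfrac14$ for every $\Omega\in\mathcal K$.
   Context: For a Kähler class $\Omega$ on a toric surface with maximal torus $T^2$, define $\mathcal B(\Omega)=\frac{1}{32\pi^2}\|\mathfrak F(\Omega)\|^2$. This is computed as follows. Let $x,y$ be the Hamiltonians of the torus action for a $T^2$-invariant Kähler metric in $\Omega$. Let $\mathfrak F_1=\int_M x(s-s_0)\,d\mu$ and $\mathfrak F_2=\int_M y(s-s_0)\,d\mu$, with $s_0$ the average scalar curvature. Let $A=\int(x-x_0)^2d\mu$, $B=\int(y-y_0)^2d\mu$, $C=\int(x-x_0)(y-y_0)d\mu$, with $x_0,y_0$ the averages. All of these depend only on $\Omega$. Then $$\mathcal B(\Omega)=\frac{1}{32\pi^2}\,\frac{B\mathfrak F_1^2-2C\mathfrak F_1\mathfrak F_2+A\mathfrak F_2^2}{AB-C^2}.$$ If $\Omega$ contains an extremal Kähler metric, this equals $\frac{1}{32\pi^2}\int(s-s_0)^2\,d\mu$. *)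

(* Defs.v *)
From Stdlib Require Import Reals Lra ClassicalEpsilon.
Open Scope R_scope.

(* Total version of the Riemann integral: the Riemann integral of f on [a,b]
   when f is Riemann integrable there (the value does not depend on the
   integrability proof, RiemannInt_P5), and 0 otherwise. *)
Definition RInt (f : R -> R) (a b : R) : R :=
  match excluded_middle_informative (inhabited (Riemann_integrable f a b)) with
  | left H => RiemannInt (epsilon H (fun _ => True))
  | right _ => 0
  end.

(* Moment polygon of a T^2-invariant Kaehler class on the blow-up M of CP^2
   at three non-collinear (torus-fixed) points.  Writing
     Omega = 2 pi (a H - b1 E1 - b2 E2 - b3 E3),
   the Kaehler cone is  b1,b2,b3 > 0  and  a > bi + bj  (i <> j), i.e. Omega
   is positive on the six (-1)-curves E_i and H - E_i - E_j.  The moment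
   polygon is the hexagon obtained from the triangle
     {x >= 0, y >= 0, x + y <= a}
   by cutting the corners: x + y >= b1, x <= a - b2, y <= a - b3.          *)

Definition kahler_cone (a b1 b2 b3 : R) : Prop :=
  0 < b1 /\ 0 < b2 /\ 0 < b3 /\
  b1 + b2 < a /\ b1 + b3 < a /\ b2 + b3 < a.

Definition hex_area_int (a b1 b2 b3 : R) (f : R -> R -> R) : R :=
  RInt (fun x => RInt (fun y => f x y) (Rmax 0 (b1 - x)) (Rmin (a - b3) (a - x)))
       0 (a - b2).

(* Integral over the boundary of the hexagon against the standard boundary
   measure d sigma (on each edge, Lebesgue length divided by the Euclidean
   length of the primitive normal vector). *)
Definition hex_bdry_int (a b1 b2 b3 : R) (f : R -> R -> R) : R :=
    RInt (fun x => f x 0) b1 (a - b2)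
  + RInt (fun y => f (a - b2) y) 0 b2
  + RInt (fun x => f x (a - x)) b3 (a - b2)
  + RInt (fun x => f x (a - b3)) 0 b3
  + RInt (fun y => f 0 y) b1 (a - b3)
  + RInt (fun x => f x (b1 - x)) 0 b1.

(* Integrals over M of T^2-invariant functions f(x,y) of the Hamiltonians,
   for the Kaehler class with parameters (a,b1,b2,b3):
     int_M f d mu        = (2 pi)^2 int_P f dx dy,
     int_M s f d mu      = 2 (2 pi)^2 int_{dP} f d sigma
   (s = Riemannian scalar curvature, d mu = omega^2/2; the second identity is
   Donaldson's integration by parts, valid for f affine, which is all that is
   used: f = 1, x, y). *)
Definition int_mu (a b1 b2 b3 : R) (f : R -> R -> R) : R :=
  (2 * PI) ^ 2 * hex_area_int a b1 b2 b3 f.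
Definition int_s_mu (a b1 b2 b3 : R) (f : R -> R -> R) : R :=
  2 * (2 * PI) ^ 2 * hex_bdry_int a b1 b2 b3 f.

Definition volume a b1 b2 b3 := int_mu a b1 b2 b3 (fun _ _ => 1).
Definition s0 a b1 b2 b3 := int_s_mu a b1 b2 b3 (fun _ _ => 1) / volume a b1 b2 b3.
Definition x0 a b1 b2 b3 := int_mu a b1 b2 b3 (fun x _ => x) / volume a b1 b2 b3.
Definition y0 a b1 b2 b3 := int_mu a b1 b2 b3 (fun _ y => y) / volume a b1 b2 b3.

Definition Fut1 a b1 b2 b3 :=
  int_s_mu a b1 b2 b3 (fun x _ => x) - s0 a b1 b2 b3 * int_mu a b1 b2 b3 (fun x _ => x).
Definition Fut2 a b1 b2 b3 :=
  int_s_mu a b1 b2 b3 (fun _ y => y) - s0 a b1 b2 b3 * int_mu a b1 b2 b3 (fun _ y => y).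

Definition Agram a b1 b2 b3 :=
  int_mu a b1 b2 b3 (fun x _ => (x - x0 a b1 b2 b3) ^ 2).
Definition Bgram a b1 b2 b3 :=
  int_mu a b1 b2 b3 (fun _ y => (y - y0 a b1 b2 b3) ^ 2).
Definition Cgram a b1 b2 b3 :=
  int_mu a b1 b2 b3 (fun x y => (x - x0 a b1 b2 b3) * (y - y0 a b1 b2 b3)).

(* B(Omega) = (1/32 pi^2) ||F(Omega)||^2 *)
Definition calB (a b1 b2 b3 : R) : R :=
  let A := Agram a b1 b2 b3 in let B := Bgram a b1 b2 b3 in
  let C := Cgram a b1 b2 b3 in
  let F1 := Fut1 a b1 b2 b3 in let F2 := Fut2 a b1 b2 b3 in
  / (32 * PI ^ 2) * ((B * F1 ^ 2 - 2 * C * F1 * F2 + A * F2 ^ 2) / (A * B - C ^ 2)).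

(* Main.v *)
Require Import Defs.
From Stdlib Require Import Reals Lra ClassicalEpsilon FunctionalExtensionality.
From Coquelicot Require Import Coquelicot.
Open Scope R_scope.

Lemma bridge (f : R -> R) (a b v : R) : is_RInt f a b v -> Defs.RInt f a b = v.
Proof.
  intros H.
  assert (Hex : ex_RInt f a b) by (exists v; exact H).
  pose proof (ex_RInt_Reals_0 f a b Hex) as pr.
  unfold Defs.RInt.
  destruct (excluded_middle_informative (inhabited (Riemann_integrable f a b))) as [Hi|Hn].
  - rewrite <- RInt_Reals. now apply is_RInt_unique.
  - exfalso; apply Hn; constructor; exact pr.
Qed.

Lemma RInt_quad (g : R -> R) (al be ga u v : R) :
  (forall t, g t = al + be * t + ga * t ^ 2) ->
  Defs.RInt g u v = al * (v - u) + be * (v ^ 2 - u ^ 2) / 2 + ga * (v ^ 3 - u ^ 3) / 3.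
Proof.
  intros Hg. apply bridge.
  set (F := fun t => al * t + be * t ^ 2 / 2 + ga * t ^ 3 / 3).
  assert (H : is_RInt (fun t => al + be * t + ga * t ^ 2) u v (minus (F v) (F u))).
  { apply (is_RInt_derive F (fun t => al + be * t + ga * t ^ 2)).
    - intros x _. unfold F. auto_derive; auto. field.
    - intros x _. apply (ex_derive_continuous (fun t => al + be * t + ga * t ^ 2)). auto_derive; auto. }
  replace (al * (v - u) + be * (v ^ 2 - u ^ 2) / 2 + ga * (v ^ 3 - u ^ 3) / 3)
    with (minus (F v) (F u)).
  2: { unfold F, minus, plus, opp; simpl; field. }
  apply (is_RInt_ext _ _ _ _ _ (fun x _ => eq_sym (Hg x)) H).
Qed.
Definition Hc (c0 c1 c2 c3 c4 c5 y x : R) : R :=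
  ((1)*x*y*c0 + (1/2)*x*y^2*c2 + (1/3)*x*y^3*c4 + (1/2)*x^2*y*c1 + (1/4)*x^2*y^2*c5 + (1/3)*x^3*y*c3).
Definition Hm (c0 c1 c2 c3 c4 c5 y x : R) : R :=
  ((1)*x*y*c0 + (1/2)*x*y^2*c2 + (1/3)*x*y^3*c4 + (-1/2)*x^2*c0 + (-1/2)*x^2*y*c2 + (1/2)*x^2*y*c1 + (1/4)*x^2*y^2*c5 + (-1/2)*x^2*y^2*c4 + (1/6)*x^3*c2 + (-1/3)*x^3*c1 + (-1/3)*x^3*y*c5 + (1/3)*x^3*y*c4 + (1/3)*x^3*y*c3 + (1/8)*x^4*c5 + (-1/12)*x^4*c4 + (-1/4)*x^4*c3).
Definition V2 (a b1 b2 b3 : R) : R :=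
  (-1)*b3^2 + (-1)*b2^2 + (-1)*b1^2 + (1)*a^2.
Definition X6 (a b1 b2 b3 : R) : R :=
  (-1)*b3^3 + (2)*b2^3 + (-1)*b1^3 + (-3)*a^1*b2^2 + (1)*a^3.
Definition Y6 (a b1 b2 b3 : R) : R :=
  (2)*b3^3 + (-1)*b2^3 + (-1)*b1^3 + (-3)*a^1*b3^2 + (1)*a^3.
Definition XX12 (a b1 b2 b3 : R) : R :=
  (-1)*b3^4 + (-3)*b2^4 + (-1)*b1^4 + (8)*a^1*b2^3 + (-6)*a^2*b2^2 + (1)*a^4.
Definition YY12 (a b1 b2 b3 : R) : R :=
  (-3)*b3^4 + (-1)*b2^4 + (-1)*b1^4 + (8)*a^1*b3^3 + (-6)*a^2*b3^2 + (1)*a^4.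
Definition XY24 (a b1 b2 b3 : R) : R :=
  (3)*b3^4 + (3)*b2^4 + (-1)*b1^4 + (-4)*a^1*b3^3 + (-4)*a^1*b2^3 + (1)*a^4.
Definition Lp (a b1 b2 b3 : R) : R :=
  (-1)*b3^1 + (-1)*b2^1 + (-1)*b1^1 + (3)*a^1.
Definition BXp (a b1 b2 b3 : R) : R :=
  (-1)*a^1*b2^1 + (1)*a^2.
Definition BYp (a b1 b2 b3 : R) : R :=
  (-1)*a^1*b3^1 + (1)*a^2.
Definition Vp a b1 b2 b3 := V2 a b1 b2 b3 / 2.
Definition Xp a b1 b2 b3 := X6 a b1 b2 b3 / 6.
Definition Yp a b1 b2 b3 := Y6 a b1 b2 b3 / 6.
Definition XXp a b1 b2 b3 := XX12 a b1 b2 b3 / 12.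
Definition YYp a b1 b2 b3 := YY12 a b1 b2 b3 / 12.
Definition XYp a b1 b2 b3 := XY24 a b1 b2 b3 / 24.

Definition Gf (c0 c1 c2 c3 c4 c5 x y : R) : R :=
  (c0 + c1 * x + c3 * x ^ 2) * y + (c2 + c5 * x) * y ^ 2 / 2 + c4 * y ^ 3 / 3.

Lemma piece (g h H : R -> R) (u v : R) :
  (forall t, Rmin u v < t < Rmax u v -> h t = g t) ->
  (forall t, is_derive H t (h t)) ->
  (forall t, ex_derive h t) ->
  is_RInt g u v (H v - H u).
Proof.
  intros E D C.
  assert (Hh : is_RInt h u v (minus (H v) (H u))).
  { apply (is_RInt_derive H h). intros; apply D. intros; apply (ex_derive_continuous h); apply C. }
  exact (is_RInt_ext _ _ _ _ _ E Hh).
Qed.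

Lemma area_quad (a b1 b2 b3 c0 c1 c2 c3 c4 c5 : R) :
  kahler_cone a b1 b2 b3 ->
  hex_area_int a b1 b2 b3 (fun x y => c0 + c1 * x + c2 * y + c3 * x ^ 2 + c4 * y ^ 2 + c5 * x * y)
  = c0 * Vp a b1 b2 b3 + c1 * Xp a b1 b2 b3 + c2 * Yp a b1 b2 b3
    + c3 * XXp a b1 b2 b3 + c4 * YYp a b1 b2 b3 + c5 * XYp a b1 b2 b3.
Proof.
  intros (h1 & h2 & h3 & h12 & h13 & h23).
  unfold hex_area_int.
  replace (fun x => Defs.RInt (fun y => c0 + c1 * x + c2 * y + c3 * x ^ 2 + c4 * y ^ 2 + c5 * x * y)
      (Rmax 0 (b1 - x)) (Rmin (a - b3) (a - x)))
    with (fun x => Gf c0 c1 c2 c3 c4 c5 x (Rmin (a - b3) (a - x)) - Gf c0 c1 c2 c3 c4 c5 x (Rmax 0 (b1 - x))).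
  2: { apply functional_extensionality. intros x.
       rewrite (RInt_quad _ (c0 + c1 * x + c3 * x ^ 2) (c2 + c5 * x) c4).
       - unfold Gf. field.
       - intros t. ring. }
  apply bridge.
  set (G := Gf c0 c1 c2 c3 c4 c5).
  assert (HU : is_RInt (fun x => G x (Rmin (a - b3) (a - x))) 0 (a - b2)
     (plus (Hc c0 c1 c2 c3 c4 c5 (a - b3) b3 - Hc c0 c1 c2 c3 c4 c5 (a - b3) 0)
           (Hm c0 c1 c2 c3 c4 c5 a (a - b2) - Hm c0 c1 c2 c3 c4 c5 a b3))).
  { apply (@is_RInt_Chasles R_NormedModule _ 0 b3 (a - b2)).
    - apply (piece _ (fun x => G x (a - b3))).
      + intros t Ht. rewrite Rmin_left, Rmax_right in Ht by lra.
        rewrite Rmin_left by lra. reflexivity.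
      + intros t. unfold Hc, G, Gf. auto_derive; auto. field.
      + intros t. unfold G, Gf. auto_derive; auto.
    - apply (piece _ (fun x => G x (a - x))).
      + intros t Ht. rewrite Rmin_left, Rmax_right in Ht by lra.
        rewrite Rmin_right by lra. reflexivity.
      + intros t. unfold Hm, G, Gf. auto_derive; auto. field.
      + intros t. unfold G, Gf. auto_derive; auto. }
  assert (HL : is_RInt (fun x => G x (Rmax 0 (b1 - x))) 0 (a - b2)
     (plus (Hm c0 c1 c2 c3 c4 c5 b1 b1 - Hm c0 c1 c2 c3 c4 c5 b1 0)
           (Hc c0 c1 c2 c3 c4 c5 0 (a - b2) - Hc c0 c1 c2 c3 c4 c5 0 b1))).
  { apply (@is_RInt_Chasles R_NormedModule _ 0 b1 (a - b2)).
    - apply (piece _ (fun x => G x (b1 - x))).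
      + intros t Ht. rewrite Rmin_left, Rmax_right in Ht by lra.
        rewrite Rmax_right by lra. reflexivity.
      + intros t. unfold Hm, G, Gf. auto_derive; auto. field.
      + intros t. unfold G, Gf. auto_derive; auto.
    - apply (piece _ (fun x => G x 0)).
      + intros t Ht. rewrite Rmin_left, Rmax_right in Ht by lra.
        rewrite Rmax_left by lra. reflexivity.
      + intros t. unfold Hc, G, Gf. auto_derive; auto. field.
      + intros t. unfold G, Gf. auto_derive; auto. }
  pose proof (is_RInt_minus _ _ _ _ _ _ HU HL) as HD.
  match type of HD with is_RInt _ _ _ ?v =>
    replace (c0 * Vp a b1 b2 b3 + c1 * Xp a b1 b2 b3 + c2 * Yp a b1 b2 b3
    + c3 * XXp a b1 b2 b3 + c4 * YYp a b1 b2 b3 + c5 * XYp a b1 b2 b3) with v end.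
  - exact HD.
  - unfold minus, plus, opp; simpl. unfold Hc, Hm, Vp, Xp, Yp, XXp, YYp, XYp, V2, X6, Y6, XX12, YY12, XY24. field.
Qed.

Lemma bdry_aff (a b1 b2 b3 d0 d1 d2 : R) :
  hex_bdry_int a b1 b2 b3 (fun x y => d0 + d1 * x + d2 * y)
  = d0 * Lp a b1 b2 b3 + d1 * BXp a b1 b2 b3 + d2 * BYp a b1 b2 b3.
Proof.
  unfold hex_bdry_int.
  rewrite (RInt_quad _ d0 d1 0 b1 (a - b2)) by (intros; ring).
  rewrite (RInt_quad _ (d0 + d1 * (a - b2)) d2 0 0 b2) by (intros; ring).
  rewrite (RInt_quad _ (d0 + d2 * a) (d1 - d2) 0 b3 (a - b2)) by (intros; ring).
  rewrite (RInt_quad _ (d0 + d2 * (a - b3)) d1 0 0 b3) by (intros; ring).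
  rewrite (RInt_quad _ d0 d2 0 b1 (a - b3)) by (intros; ring).
  rewrite (RInt_quad _ (d0 + d2 * b1) (d1 - d2) 0 0 b1) by (intros; ring).
  unfold Lp, BXp, BYp. field.
Qed.

Definition mA (v x y xx yy xy : R) : R := (-24)*y^2*xx + (24)*x*y*xy + (-24)*x^2*yy + (-9)*v*xy^2 + (36)*v*xx*yy.
Definition n2A (v x y xx yy xy l bx bY : R) : R := (3)*y^2*xx*l^2 + (-3)*x*y*xy*l^2 + (3)*x^2*yy*l^2 + (9)*v*y*xy*l*bx + (-18)*v*y*xx*l*bY + (-18)*v*y^2*bx^2 + (9)*v*x*xy*l*bY + (-18)*v*x*yy*l*bx + (36)*v*x*y*bx*bY + (-18)*v*x^2*bY^2 + (-27)*v^2*xy*bx*bY + (27)*v^2*yy*bx^2 + (27)*v^2*xx*bY^2.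
Definition V2q (p q r s : R) : R := (1)*s^2 + (2)*r^1*s^1 + (4)*q^1*s^1 + (2)*q^1*r^1 + (2)*q^2 + (4)*p^1*s^1 + (2)*p^1*r^1 + (4)*p^1*q^1 + (1)*p^2.
Lemma V2_pqrs p q r s : V2 (2*p+2*q+r+s) (p+q+r) (p+q) p = V2q p q r s.
Proof. unfold V2, V2q. ring. Qed.
Definition X6q (p q r s : R) : R := (1)*s^3 + (3)*r^1*s^2 + (3)*r^2*s^1 + (6)*q^1*s^2 + (12)*q^1*r^1*s^1 + (3)*q^1*r^2 + (9)*q^2*s^1 + (6)*q^2*r^1 + (3)*q^3 + (6)*p^1*s^2 + (12)*p^1*r^1*s^1 + (3)*p^1*r^2 + (18)*p^1*q^1*s^1 + (12)*p^1*q^1*r^1 + (9)*p^1*q^2 + (9)*p^2*s^1 + (6)*p^2*r^1 + (9)*p^2*q^1 + (2)*p^3.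
Lemma X6_pqrs p q r s : X6 (2*p+2*q+r+s) (p+q+r) (p+q) p = X6q p q r s.
Proof. unfold X6, X6q. ring. Qed.
Definition Y6q (p q r s : R) : R := (1)*s^3 + (3)*r^1*s^2 + (3)*r^2*s^1 + (6)*q^1*s^2 + (12)*q^1*r^1*s^1 + (3)*q^1*r^2 + (12)*q^2*s^1 + (9)*q^2*r^1 + (6)*q^3 + (6)*p^1*s^2 + (12)*p^1*r^1*s^1 + (3)*p^1*r^2 + (24)*p^1*q^1*s^1 + (18)*p^1*q^1*r^1 + (18)*p^1*q^2 + (9)*p^2*s^1 + (6)*p^2*r^1 + (12)*p^2*q^1 + (2)*p^3.
Lemma Y6_pqrs p q r s : Y6 (2*p+2*q+r+s) (p+q+r) (p+q) p = Y6q p q r s.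
Proof. unfold Y6, Y6q. ring. Qed.
Definition XX12q (p q r s : R) : R := (1)*s^4 + (4)*r^1*s^3 + (6)*r^2*s^2 + (4)*r^3*s^1 + (8)*q^1*s^3 + (24)*q^1*r^1*s^2 + (24)*q^1*r^2*s^1 + (4)*q^1*r^3 + (18)*q^2*s^2 + (36)*q^2*r^1*s^1 + (12)*q^2*r^2 + (16)*q^3*s^1 + (12)*q^3*r^1 + (4)*q^4 + (8)*p^1*s^3 + (24)*p^1*r^1*s^2 + (24)*p^1*r^2*s^1 + (4)*p^1*r^3 + (36)*p^1*q^1*s^2 + (72)*p^1*q^1*r^1*s^1 + (24)*p^1*q^1*r^2 + (48)*p^1*q^2*s^1 + (36)*p^1*q^2*r^1 + (16)*p^1*q^3 + (18)*p^2*s^2 + (36)*p^2*r^1*s^1 + (12)*p^2*r^2 + (48)*p^2*q^1*s^1 + (36)*p^2*q^1*r^1 + (24)*p^2*q^2 + (16)*p^3*s^1 + (12)*p^3*r^1 + (16)*p^3*q^1 + (3)*p^4.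
Lemma XX12_pqrs p q r s : XX12 (2*p+2*q+r+s) (p+q+r) (p+q) p = XX12q p q r s.
Proof. unfold XX12, XX12q. ring. Qed.
Definition YY12q (p q r s : R) : R := (1)*s^4 + (4)*r^1*s^3 + (6)*r^2*s^2 + (4)*r^3*s^1 + (8)*q^1*s^3 + (24)*q^1*r^1*s^2 + (24)*q^1*r^2*s^1 + (4)*q^1*r^3 + (24)*q^2*s^2 + (48)*q^2*r^1*s^1 + (18)*q^2*r^2 + (32)*q^3*s^1 + (28)*q^3*r^1 + (14)*q^4 + (8)*p^1*s^3 + (24)*p^1*r^1*s^2 + (24)*p^1*r^2*s^1 + (4)*p^1*r^3 + (48)*p^1*q^1*s^2 + (96)*p^1*q^1*r^1*s^1 + (36)*p^1*q^1*r^2 + (96)*p^1*q^2*s^1 + (84)*p^1*q^2*r^1 + (56)*p^1*q^3 + (18)*p^2*s^2 + (36)*p^2*r^1*s^1 + (12)*p^2*r^2 + (72)*p^2*q^1*s^1 + (60)*p^2*q^1*r^1 + (60)*p^2*q^2 + (16)*p^3*s^1 + (12)*p^3*r^1 + (24)*p^3*q^1 + (3)*p^4.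
Lemma YY12_pqrs p q r s : YY12 (2*p+2*q+r+s) (p+q+r) (p+q) p = YY12q p q r s.
Proof. unfold YY12, YY12q. ring. Qed.
Definition XY24q (p q r s : R) : R := (1)*s^4 + (4)*r^1*s^3 + (6)*r^2*s^2 + (4)*r^3*s^1 + (8)*q^1*s^3 + (24)*q^1*r^1*s^2 + (24)*q^1*r^2*s^1 + (4)*q^1*r^3 + (24)*q^2*s^2 + (48)*q^2*r^1*s^1 + (18)*q^2*r^2 + (28)*q^3*s^1 + (24)*q^3*r^1 + (10)*q^4 + (8)*p^1*s^3 + (24)*p^1*r^1*s^2 + (24)*p^1*r^2*s^1 + (4)*p^1*r^3 + (48)*p^1*q^1*s^2 + (96)*p^1*q^1*r^1*s^1 + (36)*p^1*q^1*r^2 + (84)*p^1*q^2*s^1 + (72)*p^1*q^2*r^1 + (40)*p^1*q^3 + (24)*p^2*s^2 + (48)*p^2*r^1*s^1 + (18)*p^2*r^2 + (84)*p^2*q^1*s^1 + (72)*p^2*q^1*r^1 + (60)*p^2*q^2 + (24)*p^3*s^1 + (20)*p^3*r^1 + (32)*p^3*q^1 + (5)*p^4.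
Lemma XY24_pqrs p q r s : XY24 (2*p+2*q+r+s) (p+q+r) (p+q) p = XY24q p q r s.
Proof. unfold XY24, XY24q. ring. Qed.
Definition Lpq (p q r s : R) : R := (3)*s^1 + (2)*r^1 + (4)*q^1 + (3)*p^1.
Lemma Lp_pqrs p q r s : Lp (2*p+2*q+r+s) (p+q+r) (p+q) p = Lpq p q r s.
Proof. unfold Lp, Lpq. ring. Qed.
Definition BXpq (p q r s : R) : R := (1)*s^2 + (2)*r^1*s^1 + (1)*r^2 + (3)*q^1*s^1 + (3)*q^1*r^1 + (2)*q^2 + (3)*p^1*s^1 + (3)*p^1*r^1 + (4)*p^1*q^1 + (2)*p^2.
Lemma BXp_pqrs p q r s : BXp (2*p+2*q+r+s) (p+q+r) (p+q) p = BXpq p q r s.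
Proof. unfold BXp, BXpq. ring. Qed.
Definition BYpq (p q r s : R) : R := (1)*s^2 + (2)*r^1*s^1 + (1)*r^2 + (4)*q^1*s^1 + (4)*q^1*r^1 + (4)*q^2 + (3)*p^1*s^1 + (3)*p^1*r^1 + (6)*p^1*q^1 + (2)*p^2.
Lemma BYp_pqrs p q r s : BYp (2*p+2*q+r+s) (p+q+r) (p+q) p = BYpq p q r s.
Proof. unfold BYp, BYpq. ring. Qed.
Definition QF (A B C u v : R) : R := A*u^2 + B*u*v + C*v^2.
Definition Mq (p q r s : R) : R :=
  (3)*p^10 + ((3)*s^10 +
  (30)*r^1*s^9 +
  (108)*r^2*s^8 +
  (192)*r^3*s^7 +
  (180)*r^4*s^6 +
  (72)*r^5*s^5 +
  (60)*q^1*s^9 +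
  (486)*q^1*r^1*s^8 +
  (1440)*q^1*r^2*s^7 +
  (2064)*q^1*r^3*s^6 +
  (1440)*q^1*r^4*s^5 +
  (360)*q^1*r^5*s^4 +
  (486)*q^2*s^8 +
  (3168)*q^2*r^1*s^7 +
  (7596)*q^2*r^2*s^6 +
  (8496)*q^2*r^3*s^5 +
  (4248)*q^2*r^4*s^4 +
  (720)*q^2*r^5*s^3 +
  (2112)*q^3*s^7 +
  (11064)*q^3*r^1*s^6 +
  (21024)*q^3*r^2*s^5 +
  (17712)*q^3*r^3*s^4 +
  (6336)*q^3*r^4*s^3 +
  (720)*q^3*r^5*s^2 +
  (5532)*q^4*s^6 +
  (23040)*q^4*r^1*s^5 +
  (33696)*q^4*r^2*s^4 +
  (20880)*q^4*r^3*s^3 +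
  (5148)*q^4*r^4*s^2 +
  (360)*q^4*r^5*s^1 +
  (9216)*q^5*s^5 +
  (29808)*q^5*r^1*s^4 +
  (32544)*q^5*r^2*s^3 +
  (14112)*q^5*r^3*s^2 +
  (2160)*q^5*r^4*s^1 +
  (72)*q^5*r^5 +
  (9936)*q^6*s^4 +
  (24192)*q^6*r^1*s^3 +
  (18648)*q^6*r^2*s^2 +
  (5040)*q^6*r^3*s^1 +
  (360)*q^6*r^4 +
  (6912)*q^7*s^3 +
  (11952)*q^7*r^1*s^2 +
  (5760)*q^7*r^2*s^1 +
  (720)*q^7*r^3 +
  (2988)*q^8*s^2 +
  (3240)*q^8*r^1*s^1 +
  (720)*q^8*r^2 +
  (720)*q^9*s^1 +
  (360)*q^9*r^1 +
  (72)*q^10 +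
  (60)*p^1*s^9 +
  (486)*p^1*r^1*s^8 +
  (1440)*p^1*r^2*s^7 +
  (2064)*p^1*r^3*s^6 +
  (1440)*p^1*r^4*s^5 +
  (360)*p^1*r^5*s^4 +
  (972)*p^1*q^1*s^8 +
  (6336)*p^1*q^1*r^1*s^7 +
  (15192)*p^1*q^1*r^2*s^6 +
  (16992)*p^1*q^1*r^3*s^5 +
  (8496)*p^1*q^1*r^4*s^4 +
  (1440)*p^1*q^1*r^5*s^3 +
  (6336)*p^1*q^2*s^7 +
  (33192)*p^1*q^2*r^1*s^6 +
  (63072)*p^1*q^2*r^2*s^5 +
  (53136)*p^1*q^2*r^3*s^4 +
  (19008)*p^1*q^2*r^4*s^3 +
  (2160)*p^1*q^2*r^5*s^2 +
  (22128)*p^1*q^3*s^6 +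
  (92160)*p^1*q^3*r^1*s^5 +
  (134784)*p^1*q^3*r^2*s^4 +
  (83520)*p^1*q^3*r^3*s^3 +
  (20592)*p^1*q^3*r^4*s^2 +
  (1440)*p^1*q^3*r^5*s^1 +
  (46080)*p^1*q^4*s^5 +
  (149040)*p^1*q^4*r^1*s^4 +
  (162720)*p^1*q^4*r^2*s^3 +
  (70560)*p^1*q^4*r^3*s^2 +
  (10800)*p^1*q^4*r^4*s^1 +
  (360)*p^1*q^4*r^5 +
  (59616)*p^1*q^5*s^4 +
  (145152)*p^1*q^5*r^1*s^3 +
  (111888)*p^1*q^5*r^2*s^2 +
  (30240)*p^1*q^5*r^3*s^1 +
  (2160)*p^1*q^5*r^4 +
  (48384)*p^1*q^6*s^3 +
  (83664)*p^1*q^6*r^1*s^2 +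
  (40320)*p^1*q^6*r^2*s^1 +
  (5040)*p^1*q^6*r^3 +
  (23904)*p^1*q^7*s^2 +
  (25920)*p^1*q^7*r^1*s^1 +
  (5760)*p^1*q^7*r^2 +
  (6480)*p^1*q^8*s^1 +
  (3240)*p^1*q^8*r^1 +
  (720)*p^1*q^9 +
  (459)*p^2*s^8 +
  (2952)*p^2*r^1*s^7 +
  (7056)*p^2*r^2*s^6 +
  (7920)*p^2*r^3*s^5 +
  (3996)*p^2*r^4*s^4 +
  (720)*p^2*r^5*s^3 +
  (5904)*p^2*q^1*s^7 +
  (30600)*p^2*q^1*r^1*s^6 +
  (58104)*p^2*q^1*r^2*s^5 +
  (49248)*p^2*q^1*r^3*s^4 +
  (18000)*p^2*q^1*r^4*s^3 +
  (2160)*p^2*q^1*r^5*s^2 +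
  (30600)*p^2*q^2*s^6 +
  (126792)*p^2*q^2*r^1*s^5 +
  (185868)*p^2*q^2*r^2*s^4 +
  (116352)*p^2*q^2*r^3*s^3 +
  (29376)*p^2*q^2*r^4*s^2 +
  (2160)*p^2*q^2*r^5*s^1 +
  (84528)*p^2*q^3*s^5 +
  (273240)*p^2*q^3*r^1*s^4 +
  (299808)*p^2*q^3*r^2*s^3 +
  (131472)*p^2*q^3*r^3*s^2 +
  (20592)*p^2*q^3*r^4*s^1 +
  (720)*p^2*q^3*r^5 +
  (136620)*p^2*q^4*s^4 +
  (333360)*p^2*q^4*r^1*s^3 +
  (258336)*p^2*q^4*r^2*s^2 +
  (70560)*p^2*q^4*r^3*s^1 +
  (5148)*p^2*q^4*r^4 +
  (133344)*p^2*q^5*s^3 +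
  (231120)*p^2*q^5*r^1*s^2 +
  (111888)*p^2*q^5*r^2*s^1 +
  (14112)*p^2*q^5*r^3 +
  (77040)*p^2*q^6*s^2 +
  (83664)*p^2*q^6*r^1*s^1 +
  (18648)*p^2*q^6*r^2 +
  (23904)*p^2*q^7*s^1 +
  (11952)*p^2*q^7*r^1 +
  (2988)*p^2*q^8 +
  (1728)*p^3*s^7 +
  (8808)*p^3*r^1*s^6 +
  (16704)*p^3*r^2*s^5 +
  (14304)*p^3*r^3*s^4 +
  (5472)*p^3*r^4*s^3 +
  (720)*p^3*r^5*s^2 +
  (17616)*p^3*q^1*s^6 +
  (72576)*p^3*q^1*r^1*s^5 +
  (106848)*p^3*q^1*r^2*s^4 +
  (68160)*p^3*q^1*r^3*s^3 +
  (18000)*p^3*q^1*r^4*s^2 +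
  (1440)*p^3*q^1*r^5*s^1 +
  (72576)*p^3*q^2*s^5 +
  (234720)*p^3*q^2*r^1*s^4 +
  (259776)*p^3*q^2*r^2*s^3 +
  (116352)*p^3*q^2*r^3*s^2 +
  (19008)*p^3*q^2*r^4*s^1 +
  (720)*p^3*q^2*r^5 +
  (156480)*p^3*q^3*s^4 +
  (383232)*p^3*q^3*r^1*s^3 +
  (299808)*p^3*q^3*r^2*s^2 +
  (83520)*p^3*q^3*r^3*s^1 +
  (6336)*p^3*q^3*r^4 +
  (191616)*p^3*q^4*s^3 +
  (333360)*p^3*q^4*r^1*s^2 +
  (162720)*p^3*q^4*r^2*s^1 +
  (20880)*p^3*q^4*r^3 +
  (133344)*p^3*q^5*s^2 +
  (145152)*p^3*q^5*r^1*s^1 +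
  (32544)*p^3*q^5*r^2 +
  (48384)*p^3*q^6*s^1 +
  (24192)*p^3*q^6*r^1 +
  (6912)*p^3*q^7 +
  (3582)*p^4*s^6 +
  (14724)*p^4*r^1*s^5 +
  (21816)*p^4*r^2*s^4 +
  (14304)*p^4*r^3*s^3 +
  (3996)*p^4*r^4*s^2 +
  (360)*p^4*r^5*s^1 +
  (29448)*p^4*q^1*s^5 +
  (95436)*p^4*q^1*r^1*s^4 +
  (106848)*p^4*q^1*r^2*s^3 +
  (49248)*p^4*q^1*r^3*s^2 +
  (8496)*p^4*q^1*r^4*s^1 +
  (360)*p^4*q^1*r^5 +
  (95436)*p^4*q^2*s^4 +
  (234720)*p^4*q^2*r^1*s^3 +
  (185868)*p^4*q^2*r^2*s^2 +
  (53136)*p^4*q^2*r^3*s^1 +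
  (4248)*p^4*q^2*r^4 +
  (156480)*p^4*q^3*s^3 +
  (273240)*p^4*q^3*r^1*s^2 +
  (134784)*p^4*q^3*r^2*s^1 +
  (17712)*p^4*q^3*r^3 +
  (136620)*p^4*q^4*s^2 +
  (149040)*p^4*q^4*r^1*s^1 +
  (33696)*p^4*q^4*r^2 +
  (59616)*p^4*q^5*s^1 +
  (29808)*p^4*q^5*r^1 +
  (9936)*p^4*q^6 +
  (4536)*p^5*s^5 +
  (14724)*p^5*r^1*s^4 +
  (16704)*p^5*r^2*s^3 +
  (7920)*p^5*r^3*s^2 +
  (1440)*p^5*r^4*s^1 +
  (72)*p^5*r^5 +
  (29448)*p^5*q^1*s^4 +
  (72576)*p^5*q^1*r^1*s^3 +
  (58104)*p^5*q^1*r^2*s^2 +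
  (16992)*p^5*q^1*r^3*s^1 +
  (1440)*p^5*q^1*r^4 +
  (72576)*p^5*q^2*s^3 +
  (126792)*p^5*q^2*r^1*s^2 +
  (63072)*p^5*q^2*r^2*s^1 +
  (8496)*p^5*q^2*r^3 +
  (84528)*p^5*q^3*s^2 +
  (92160)*p^5*q^3*r^1*s^1 +
  (21024)*p^5*q^3*r^2 +
  (46080)*p^5*q^4*s^1 +
  (23040)*p^5*q^4*r^1 +
  (9216)*p^5*q^5 +
  (3582)*p^6*s^4 +
  (8808)*p^6*r^1*s^3 +
  (7056)*p^6*r^2*s^2 +
  (2064)*p^6*r^3*s^1 +
  (180)*p^6*r^4 +
  (17616)*p^6*q^1*s^3 +
  (30600)*p^6*q^1*r^1*s^2 +
  (15192)*p^6*q^1*r^2*s^1 +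
  (2064)*p^6*q^1*r^3 +
  (30600)*p^6*q^2*s^2 +
  (33192)*p^6*q^2*r^1*s^1 +
  (7596)*p^6*q^2*r^2 +
  (22128)*p^6*q^3*s^1 +
  (11064)*p^6*q^3*r^1 +
  (5532)*p^6*q^4 +
  (1728)*p^7*s^3 +
  (2952)*p^7*r^1*s^2 +
  (1440)*p^7*r^2*s^1 +
  (192)*p^7*r^3 +
  (5904)*p^7*q^1*s^2 +
  (6336)*p^7*q^1*r^1*s^1 +
  (1440)*p^7*q^1*r^2 +
  (6336)*p^7*q^2*s^1 +
  (3168)*p^7*q^2*r^1 +
  (2112)*p^7*q^3 +
  (459)*p^8*s^2 +
  (486)*p^8*r^1*s^1 +
  (108)*p^8*r^2 +
  (972)*p^8*q^1*s^1 +
  (486)*p^8*q^1*r^1 +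
  (486)*p^8*q^2 +
  (60)*p^9*s^1 +
  (30)*p^9*r^1 +
  (60)*p^9*q^1).
Definition N2q (p q r s : R) : R :=
  (3)*r^2*s^10 + (12)*r^3*s^9 + (18)*r^4*s^8 + (12)*r^5*s^7 + (3)*q^1*r^1*s^10 + (45)*q^1*r^2*s^9 + (126)*q^1*r^3*s^8 + (138)*q^1*r^4*s^7 + (48)*q^1*r^5*s^6 + (3)*q^2*s^10 + (63)*q^2*r^1*s^9 + (351)*q^2*r^2*s^8 + (669)*q^2*r^3*s^7 + (507)*q^2*r^4*s^6 + (126)*q^2*r^5*s^5 + (42)*q^3*s^9 + (450)*q^3*r^1*s^8 + (1536)*q^3*r^2*s^7 + (2067)*q^3*r^3*s^6 + (1134)*q^3*r^4*s^5 + (198)*q^3*r^5*s^4 + (225)*q^4*s^8 + (1635)*q^4*r^1*s^7 + (3906)*q^4*r^2*s^6 + (3780)*q^4*r^3*s^5 + (1440)*q^4*r^4*s^4 + (162)*q^4*r^5*s^3 + (654)*q^5*s^7 + (3447)*q^5*r^1*s^6 + (5922)*q^5*r^2*s^5 + (3978)*q^5*r^3*s^4 + (972)*q^5*r^4*s^3 + (54)*q^5*r^5*s^2 + (1149)*q^6*s^6 + (4410)*q^6*r^1*s^5 + (5274)*q^6*r^2*s^4 + (2268)*q^6*r^3*s^3 + (270)*q^6*r^4*s^2 + (1260)*q^7*s^5 + (3384)*q^7*r^1*s^4 + (2592)*q^7*r^2*s^3 + (540)*q^7*r^3*s^2 + (846)*q^8*s^4 + (1458)*q^8*r^1*s^3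 + (540)*q^8*r^2*s^2 + (324)*q^9*s^3 + (270)*q^9*r^1*s^2 + (54)*q^10*s^2 + (24)*p^1*r^2*s^9 + (72)*p^1*r^3*s^8 + (72)*p^1*r^4*s^7 + (12)*p^1*r^5*s^6 + (24)*p^1*q^1*r^1*s^9 + (252)*p^1*q^1*r^2*s^8 + (504)*p^1*q^1*r^3*s^7 + (300)*p^1*q^1*r^4*s^6 + (36)*p^1*q^1*r^5*s^5 + (24)*p^1*q^2*s^9 + (324)*p^1*q^2*r^1*s^8 + (1350)*p^1*q^2*r^2*s^7 + (1713)*p^1*q^2*r^3*s^6 + (702)*p^1*q^2*r^4*s^5 + (54)*p^1*q^2*r^5*s^4 + (216)*p^1*q^3*s^8 + (1692)*p^1*q^3*r^1*s^7 + (4092)*p^1*q^3*r^2*s^6 + (3366)*p^1*q^3*r^3*s^5 + (756)*p^1*q^3*r^4*s^4 + (-36)*p^1*q^3*r^5*s^3 + (846)*p^1*q^4*s^7 + (4425)*p^1*q^4*r^1*s^6 + (6768)*p^1*q^4*r^2*s^5 + (2970)*p^1*q^4*r^3*s^4 + (-144)*p^1*q^4*r^4*s^3 + (-162)*p^1*q^4*r^5*s^2 + (1770)*p^1*q^5*s^6 + (6102)*p^1*q^5*r^1*s^5 + (4968)*p^1*q^5*r^2*s^4 + (-252)*p^1*q^5*r^3*s^3 + (-972)*p^1*q^5*r^4*s^2 + (-108)*p^1*q^5*r^5*s^1 + (2034)*p^1*q^6*s^5 + (3780)*p^1*q^6*r^1*s^4 + (-252)*p^1*q^6*r^2*s^3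 + (-2268)*p^1*q^6*r^3*s^2 + (-540)*p^1*q^6*r^4*s^1 + (1080)*p^1*q^7*s^4 + (-144)*p^1*q^7*r^1*s^3 + (-2592)*p^1*q^7*r^2*s^2 + (-1080)*p^1*q^7*r^3*s^1 + (-36)*p^1*q^8*s^3 + (-1458)*p^1*q^8*r^1*s^2 + (-1080)*p^1*q^8*r^2*s^1 + (-324)*p^1*q^9*s^2 + (-540)*p^1*q^9*r^1*s^1 + (-108)*p^1*q^10*s^1 + (36)*p^2*r^2*s^8 + (72)*p^2*r^3*s^7 + (18)*p^2*r^4*s^6 + (36)*p^2*q^1*r^1*s^8 + (279)*p^2*q^1*r^2*s^7 + (270)*p^2*q^1*r^3*s^6 + (-36)*p^2*q^1*r^5*s^4 + (36)*p^2*q^2*s^8 + (405)*p^2*q^2*r^1*s^7 + (936)*p^2*q^2*r^2*s^6 + (189)*p^2*q^2*r^3*s^5 + (-513)*p^2*q^2*r^4*s^4 + (-180)*p^2*q^2*r^5*s^3 + (270)*p^2*q^3*s^7 + (1332)*p^2*q^3*r^1*s^6 + (756)*p^2*q^3*r^2*s^5 + (-2151)*p^2*q^3*r^3*s^4 + (-1890)*p^2*q^3*r^4*s^3 + (-324)*p^2*q^3*r^5*s^2 + (666)*p^2*q^4*s^6 + (945)*p^2*q^4*r^1*s^5 + (-4068)*p^2*q^4*r^2*s^4 + (-6750)*p^2*q^4*r^3*s^3 + (-2592)*p^2*q^4*r^4*s^2 + (-162)*p^2*q^4*r^5*s^1 + (378)*p^2*q^5*s^5 + (-3591)*p^2*q^5*r^1*s^4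 + (-10890)*p^2*q^5*r^2*s^3 + (-7452)*p^2*q^5*r^3*s^2 + (-972)*p^2*q^5*r^4*s^1 + (54)*p^2*q^5*r^5 + (-1197)*p^2*q^6*s^4 + (-8190)*p^2*q^6*r^1*s^3 + (-10044)*p^2*q^6*r^2*s^2 + (-2268)*p^2*q^6*r^3*s^1 + (270)*p^2*q^6*r^4 + (-2340)*p^2*q^7*s^3 + (-6480)*p^2*q^7*r^1*s^2 + (-2592)*p^2*q^7*r^2*s^1 + (540)*p^2*q^7*r^3 + (-1620)*p^2*q^8*s^2 + (-1458)*p^2*q^8*r^1*s^1 + (540)*p^2*q^8*r^2 + (-324)*p^2*q^9*s^1 + (270)*p^2*q^9*r^1 + (54)*p^2*q^10 + (18)*p^3*r^2*s^7 + (-12)*p^3*r^3*s^6 + (-36)*p^3*r^4*s^5 + (-24)*p^3*r^5*s^4 + (18)*p^3*q^1*r^1*s^7 + (-45)*p^3*q^1*r^2*s^6 + (-396)*p^3*q^1*r^3*s^5 + (-438)*p^3*q^1*r^4*s^4 + (-96)*p^3*q^1*r^5*s^3 + (18)*p^3*q^2*s^7 + (-63)*p^3*q^2*r^1*s^6 + (-1206)*p^3*q^2*r^2*s^5 + (-2571)*p^3*q^2*r^3*s^4 + (-1392)*p^3*q^2*r^4*s^3 + (-180)*p^3*q^2*r^5*s^2 + (-42)*p^3*q^3*s^6 + (-1620)*p^3*q^3*r^1*s^5 + (-6384)*p^3*q^3*r^2*s^4 + (-6564)*p^3*q^3*r^3*s^3 + (-1890)*p^3*q^3*r^4*s^2 +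 (-36)*p^3*q^3*r^5*s^1 + (-810)*p^3*q^4*s^5 + (-7005)*p^3*q^4*r^1*s^4 + (-13212)*p^3*q^4*r^2*s^3 + (-6750)*p^3*q^4*r^3*s^2 + (-144)*p^3*q^4*r^4*s^1 + (162)*p^3*q^4*r^5 + (-2802)*p^3*q^5*s^4 + (-11916)*p^3*q^5*r^1*s^3 + (-10890)*p^3*q^5*r^2*s^2 + (-252)*p^3*q^5*r^3*s^1 + (972)*p^3*q^5*r^4 + (-3972)*p^3*q^6*s^3 + (-8190)*p^3*q^6*r^1*s^2 + (-252)*p^3*q^6*r^2*s^1 + (2268)*p^3*q^6*r^3 + (-2340)*p^3*q^7*s^2 + (-144)*p^3*q^7*r^1*s^1 + (2592)*p^3*q^7*r^2 + (-36)*p^3*q^8*s^1 + (1458)*p^3*q^8*r^1 + (324)*p^3*q^9 + (-45)*p^4*r^2*s^6 + (-144)*p^4*r^3*s^5 + (-144)*p^4*r^4*s^4 + (-24)*p^4*r^5*s^3 + (-45)*p^4*q^1*r^1*s^6 + (-531)*p^4*q^1*r^2*s^5 + (-1008)*p^4*q^1*r^3*s^4 + (-438)*p^4*q^1*r^4*s^3 + (-36)*p^4*q^1*r^5*s^2 + (-45)*p^4*q^2*s^6 + (-729)*p^4*q^2*r^1*s^5 + (-2862)*p^4*q^2*r^2*s^4 + (-2571)*p^4*q^2*r^3*s^3 + (-513)*p^4*q^2*r^4*s^2 + (54)*p^4*q^2*r^5*s^1 + (-486)*p^4*q^3*s^5 + (-3708)*p^4*q^3*r^1*s^4 + (-6384)*p^4*q^3*r^2*s^3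 + (-2151)*p^4*q^3*r^3*s^2 + (756)*p^4*q^3*r^4*s^1 + (198)*p^4*q^3*r^5 + (-1854)*p^4*q^4*s^4 + (-7005)*p^4*q^4*r^1*s^3 + (-4068)*p^4*q^4*r^2*s^2 + (2970)*p^4*q^4*r^3*s^1 + (1440)*p^4*q^4*r^4 + (-2802)*p^4*q^5*s^3 + (-3591)*p^4*q^5*r^1*s^2 + (4968)*p^4*q^5*r^2*s^1 + (3978)*p^4*q^5*r^3 + (-1197)*p^4*q^6*s^2 + (3780)*p^4*q^6*r^1*s^1 + (5274)*p^4*q^6*r^2 + (1080)*p^4*q^7*s^1 + (3384)*p^4*q^7*r^1 + (846)*p^4*q^8 + (-72)*p^5*r^2*s^5 + (-144)*p^5*r^3*s^4 + (-36)*p^5*r^4*s^3 + (-72)*p^5*q^1*r^1*s^5 + (-531)*p^5*q^1*r^2*s^4 + (-396)*p^5*q^1*r^3*s^3 + (36)*p^5*q^1*r^5*s^1 + (-72)*p^5*q^2*s^5 + (-729)*p^5*q^2*r^1*s^4 + (-1206)*p^5*q^2*r^2*s^3 + (189)*p^5*q^2*r^3*s^2 + (702)*p^5*q^2*r^4*s^1 + (126)*p^5*q^2*r^5 + (-486)*p^5*q^3*s^4 + (-1620)*p^5*q^3*r^1*s^3 + (756)*p^5*q^3*r^2*s^2 + (3366)*p^5*q^3*r^3*s^1 + (1134)*p^5*q^3*r^4 + (-810)*p^5*q^4*s^3 + (945)*p^5*q^4*r^1*s^2 + (6768)*p^5*q^4*r^2*s^1 + (3780)*p^5*q^4*r^3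 + (378)*p^5*q^5*s^2 + (6102)*p^5*q^5*r^1*s^1 + (5922)*p^5*q^5*r^2 + (2034)*p^5*q^6*s^1 + (4410)*p^5*q^6*r^1 + (1260)*p^5*q^7 + (-45)*p^6*r^2*s^4 + (-12)*p^6*r^3*s^3 + (18)*p^6*r^4*s^2 + (12)*p^6*r^5*s^1 + (-45)*p^6*q^1*r^1*s^4 + (-45)*p^6*q^1*r^2*s^3 + (270)*p^6*q^1*r^3*s^2 + (300)*p^6*q^1*r^4*s^1 + (48)*p^6*q^1*r^5 + (-45)*p^6*q^2*s^4 + (-63)*p^6*q^2*r^1*s^3 + (936)*p^6*q^2*r^2*s^2 + (1713)*p^6*q^2*r^3*s^1 + (507)*p^6*q^2*r^4 + (-42)*p^6*q^3*s^3 + (1332)*p^6*q^3*r^1*s^2 + (4092)*p^6*q^3*r^2*s^1 + (2067)*p^6*q^3*r^3 + (666)*p^6*q^4*s^2 + (4425)*p^6*q^4*r^1*s^1 + (3906)*p^6*q^4*r^2 + (1770)*p^6*q^5*s^1 + (3447)*p^6*q^5*r^1 + (1149)*p^6*q^6 + (18)*p^7*r^2*s^3 + (72)*p^7*r^3*s^2 + (72)*p^7*r^4*s^1 + (12)*p^7*r^5 + (18)*p^7*q^1*r^1*s^3 + (279)*p^7*q^1*r^2*s^2 + (504)*p^7*q^1*r^3*s^1 + (138)*p^7*q^1*r^4 + (18)*p^7*q^2*s^3 + (405)*p^7*q^2*r^1*s^2 + (1350)*p^7*q^2*r^2*s^1 + (669)*p^7*q^2*r^3 + (270)*p^7*q^3*s^2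 + (1692)*p^7*q^3*r^1*s^1 + (1536)*p^7*q^3*r^2 + (846)*p^7*q^4*s^1 + (1635)*p^7*q^4*r^1 + (654)*p^7*q^5 + (36)*p^8*r^2*s^2 + (72)*p^8*r^3*s^1 + (18)*p^8*r^4 + (36)*p^8*q^1*r^1*s^2 + (252)*p^8*q^1*r^2*s^1 + (126)*p^8*q^1*r^3 + (36)*p^8*q^2*s^2 + (324)*p^8*q^2*r^1*s^1 + (351)*p^8*q^2*r^2 + (216)*p^8*q^3*s^1 + (450)*p^8*q^3*r^1 + (225)*p^8*q^4 + (24)*p^9*r^2*s^1 + (12)*p^9*r^3 + (24)*p^9*q^1*r^1*s^1 + (45)*p^9*q^1*r^2 + (24)*p^9*q^2*s^1 + (63)*p^9*q^2*r^1 + (42)*p^9*q^3 + (3)*p^10*r^2 + (3)*p^10*q^1*r^1 + (3)*p^10*q^2.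
Definition Rq (p q r s : R) : R :=
  (3)*p^12 + ((3)*s^12 +
  (36)*r^1*s^11 +
  (24)*r^3*s^9 +
  (48)*r^5*s^7 +
  (72)*q^1*s^11 +
  (636)*q^1*r^1*s^10 +
  (1464)*q^1*r^2*s^9 +
  (1896)*q^1*r^3*s^8 +
  (2256)*q^1*r^4*s^7 +
  (2352)*q^1*r^5*s^6 +
  (864)*q^1*r^6*s^5 +
  (636)*q^2*s^10 +
  (4248)*q^2*r^1*s^9 +
  (9648)*q^2*r^2*s^8 +
  (13800)*q^2*r^3*s^7 +
  (15264)*q^2*r^4*s^6 +
  (9648)*q^2*r^5*s^5 +
  (2160)*q^2*r^6*s^4 +
  (2832)*q^3*s^9 +
  (15504)*q^3*r^1*s^8 +
  (33600)*q^3*r^2*s^7 +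
  (46920)*q^3*r^3*s^6 +
  (42336)*q^3*r^4*s^5 +
  (19152)*q^3*r^5*s^4 +
  (2880)*q^3*r^6*s^3 +
  (7752)*q^4*s^8 +
  (36600)*q^4*r^1*s^7 +
  (76200)*q^4*r^2*s^6 +
  (97200)*q^4*r^3*s^5 +
  (70092)*q^4*r^4*s^4 +
  (22464)*q^4*r^5*s^3 +
  (2160)*q^4*r^6*s^2 +
  (14640)*q^5*s^7 +
  (63288)*q^5*r^1*s^6 +
  (125568)*q^5*r^2*s^5 +
  (138240)*q^5*r^3*s^4 +
  (74304)*q^5*r^4*s^3 +
  (15840)*q^5*r^5*s^2 +
  (864)*q^5*r^6*s^1 +
  (21096)*q^6*s^6 +
  (86688)*q^6*r^1*s^5 +
  (155448)*q^6*r^2*s^4 +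
  (133056)*q^6*r^3*s^3 +
  (48960)*q^6*r^4*s^2 +
  (6048)*q^6*r^5*s^1 +
  (144)*q^6*r^6 +
  (24768)*q^7*s^5 +
  (93744)*q^7*r^1*s^4 +
  (134784)*q^7*r^2*s^3 +
  (80640)*q^7*r^3*s^2 +
  (17280)*q^7*r^4*s^1 +
  (864)*q^7*r^5 +
  (23436)*q^8*s^4 +
  (72576)*q^8*r^1*s^3 +
  (74160)*q^8*r^2*s^2 +
  (25920)*q^8*r^3*s^1 +
  (2160)*q^8*r^4 +
  (16128)*q^9*s^3 +
  (36000)*q^9*r^1*s^2 +
  (21600)*q^9*r^2*s^1 +
  (2880)*q^9*r^3 +
  (7200)*q^10*s^2 +
  (9504)*q^10*r^1*s^1 +
  (2160)*q^10*r^2 +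
  (1728)*q^11*s^1 +
  (864)*q^11*r^1 +
  (144)*q^12 +
  (72)*p^1*s^11 +
  (732)*p^1*r^1*s^10 +
  (2136)*p^1*r^2*s^9 +
  (3624)*p^1*r^3*s^8 +
  (4368)*p^1*r^4*s^7 +
  (3504)*p^1*r^5*s^6 +
  (864)*p^1*r^6*s^5 +
  (1464)*p^1*q^1*s^10 +
  (11760)*p^1*q^1*r^1*s^9 +
  (33696)*p^1*q^1*r^2*s^8 +
  (54288)*p^1*q^1*r^3*s^7 +
  (53376)*p^1*q^1*r^4*s^6 +
  (26208)*p^1*q^1*r^5*s^5 +
  (4320)*p^1*q^1*r^6*s^4 +
  (11760)*p^1*q^2*s^9 +
  (79344)*p^1*q^2*r^1*s^8 +
  (205056)*p^1*q^2*r^2*s^7 +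
  (284376)*p^1*q^2*r^3*s^6 +
  (213408)*p^1*q^2*r^4*s^5 +
  (74736)*p^1*q^2*r^5*s^4 +
  (8640)*p^1*q^2*r^6*s^3 +
  (52896)*p^1*q^3*s^8 +
  (301536)*p^1*q^3*r^1*s^7 +
  (673824)*p^1*q^3*r^2*s^6 +
  (764928)*p^1*q^3*r^3*s^5 +
  (440496)*p^1*q^3*r^4*s^4 +
  (111744)*p^1*q^3*r^5*s^3 +
  (8640)*p^1*q^3*r^6*s^2 +
  (150768)*p^1*q^4*s^7 +
  (726360)*p^1*q^4*r^1*s^6 +
  (1358784)*p^1*q^4*r^2*s^5 +
  (1232640)*p^1*q^4*r^3*s^4 +
  (531648)*p^1*q^4*r^4*s^3 +
  (93024)*p^1*q^4*r^5*s^2 +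
  (4320)*p^1*q^4*r^6*s^1 +
  (290544)*p^1*q^5*s^6 +
  (1171584)*p^1*q^5*r^1*s^5 +
  (1786320)*p^1*q^5*r^2*s^4 +
  (1241856)*p^1*q^5*r^3*s^3 +
  (376704)*p^1*q^5*r^4*s^2 +
  (39744)*p^1*q^5*r^5*s^1 +
  (864)*p^1*q^5*r^6 +
  (390528)*p^1*q^6*s^5 +
  (1293264)*p^1*q^6*r^1*s^4 +
  (1532160)*p^1*q^6*r^2*s^3 +
  (758016)*p^1*q^6*r^3*s^2 +
  (138240)*p^1*q^6*r^4*s^1 +
  (6048)*p^1*q^6*r^5 +
  (369504)*p^1*q^7*s^4 +
  (958464)*p^1*q^7*r^1*s^3 +
  (814464)*p^1*q^7*r^2*s^2 +
  (241920)*p^1*q^7*r^3*s^1 +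
  (17280)*p^1*q^7*r^4 +
  (239616)*p^1*q^8*s^3 +
  (448416)*p^1*q^8*r^1*s^2 +
  (228960)*p^1*q^8*r^2*s^1 +
  (25920)*p^1*q^8*r^3 +
  (99648)*p^1*q^9*s^2 +
  (112320)*p^1*q^9*r^1*s^1 +
  (21600)*p^1*q^9*r^2 +
  (22464)*p^1*q^10*s^1 +
  (9504)*p^1*q^10*r^1 +
  (1728)*p^1*q^11 +
  (702)*p^2*s^10 +
  (5964)*p^2*r^1*s^9 +
  (18648)*p^2*r^2*s^8 +
  (31056)*p^2*r^3*s^7 +
  (29328)*p^2*r^4*s^6 +
  (13104)*p^2*r^5*s^5 +
  (2160)*p^2*r^6*s^4 +
  (11928)*p^2*q^1*s^9 +
  (83700)*p^2*q^1*r^1*s^8 +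
  (225144)*p^2*q^1*r^2*s^7 +
  (311280)*p^2*q^1*r^3*s^6 +
  (223488)*p^2*q^1*r^4*s^5 +
  (74736)*p^2*q^1*r^5*s^4 +
  (8640)*p^2*q^1*r^6*s^3 +
  (83700)*p^2*q^2*s^8 +
  (489096)*p^2*q^2*r^1*s^7 +
  (1104264)*p^2*q^2*r^2*s^6 +
  (1226232)*p^2*q^2*r^3*s^5 +
  (677520)*p^2*q^2*r^4*s^4 +
  (165888)*p^2*q^2*r^5*s^3 +
  (12960)*p^2*q^2*r^6*s^2 +
  (326064)*p^2*q^3*s^7 +
  (1585968)*p^2*q^3*r^1*s^6 +
  (2932128)*p^2*q^3*r^2*s^5 +
  (2569464)*p^2*q^3*r^3*s^4 +
  (1062000)*p^2*q^3*r^4*s^3 +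
  (180288)*p^2*q^3*r^5*s^2 +
  (8640)*p^2*q^3*r^6*s^1 +
  (792984)*p^2*q^4*s^6 +
  (3171960)*p^2*q^4*r^1*s^5 +
  (4694472)*p^2*q^4*r^2*s^4 +
  (3124080)*p^2*q^4*r^3*s^3 +
  (905112)*p^2*q^4*r^4*s^2 +
  (93024)*p^2*q^4*r^5*s^1 +
  (2160)*p^2*q^4*r^6 +
  (1268784)*p^2*q^5*s^5 +
  (4091688)*p^2*q^5*r^1*s^4 +
  (4643568)*p^2*q^5*r^2*s^3 +
  (2179296)*p^2*q^5*r^3*s^2 +
  (376704)*p^2*q^5*r^4*s^1 +
  (15840)*p^2*q^5*r^5 +
  (1363896)*p^2*q^6*s^4 +
  (3393936)*p^2*q^6*r^1*s^3 +
  (2728656)*p^2*q^6*r^2*s^2 +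
  (758016)*p^2*q^6*r^3*s^1 +
  (48960)*p^2*q^6*r^4 +
  (969696)*p^2*q^7*s^3 +
  (1716192)*p^2*q^7*r^1*s^2 +
  (814464)*p^2*q^7*r^2*s^1 +
  (80640)*p^2*q^7*r^3 +
  (429048)*p^2*q^8*s^2 +
  (448416)*p^2*q^8*r^1*s^1 +
  (74160)*p^2*q^8*r^2 +
  (99648)*p^2*q^9*s^1 +
  (36000)*p^2*q^9*r^1 +
  (7200)*p^2*q^10 +
  (3624)*p^3*s^9 +
  (25476)*p^3*r^1*s^8 +
  (69312)*p^3*r^2*s^7 +
  (95952)*p^3*r^3*s^6 +
  (68496)*p^3*r^4*s^5 +
  (23664)*p^3*r^5*s^4 +
  (2880)*p^3*r^6*s^3 +
  (50952)*p^3*q^1*s^8 +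
  (298272)*p^3*q^1*r^1*s^7 +
  (674904)*p^3*q^1*r^2*s^6 +
  (747024)*p^3*q^1*r^3*s^5 +
  (413808)*p^3*q^1*r^4*s^4 +
  (103296)*p^3*q^1*r^5*s^3 +
  (8640)*p^3*q^1*r^6*s^2 +
  (298272)*p^3*q^2*s^7 +
  (1449000)*p^3*q^2*r^1*s^6 +
  (2666304)*p^3*q^2*r^2*s^5 +
  (2320392)*p^3*q^2*r^3*s^4 +
  (956736)*p^3*q^2*r^4*s^3 +
  (165888)*p^3*q^2*r^5*s^2 +
  (8640)*p^3*q^2*r^6*s^1 +
  (966000)*p^3*q^3*s^6 +
  (3838560)*p^3*q^3*r^1*s^5 +
  (5616768)*p^3*q^3*r^2*s^4 +
  (3688896)*p^3*q^3*r^3*s^3 +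
  (1062000)*p^3*q^3*r^4*s^2 +
  (111744)*p^3*q^3*r^5*s^1 +
  (2880)*p^3*q^3*r^6 +
  (1919280)*p^3*q^4*s^5 +
  (6104760)*p^3*q^4*r^1*s^4 +
  (6799488)*p^3*q^4*r^2*s^3 +
  (3124080)*p^3*q^4*r^3*s^2 +
  (531648)*p^3*q^4*r^4*s^1 +
  (22464)*p^3*q^4*r^5 +
  (2441904)*p^3*q^5*s^4 +
  (5946048)*p^3*q^5*r^1*s^3 +
  (4643568)*p^3*q^5*r^2*s^2 +
  (1241856)*p^3*q^5*r^3*s^1 +
  (74304)*p^3*q^5*r^4 +
  (1982016)*p^3*q^6*s^3 +
  (3393936)*p^3*q^6*r^1*s^2 +
  (1532160)*p^3*q^6*r^2*s^1 +
  (133056)*p^3*q^6*r^3 +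
  (969696)*p^3*q^7*s^2 +
  (958464)*p^3*q^7*r^1*s^1 +
  (134784)*p^3*q^7*r^2 +
  (239616)*p^3*q^8*s^1 +
  (72576)*p^3*q^8*r^1 +
  (16128)*p^3*q^9 +
  (10953)*p^4*s^8 +
  (63528)*p^4*r^1*s^7 +
  (144192)*p^4*r^2*s^6 +
  (161088)*p^4*r^3*s^5 +
  (91704)*p^4*r^4*s^4 +
  (23664)*p^4*r^5*s^3 +
  (2160)*p^4*r^6*s^2 +
  (127056)*p^4*q^1*s^7 +
  (613200)*p^4*q^1*r^1*s^6 +
  (1128888)*p^4*q^1*r^2*s^5 +
  (988848)*p^4*q^1*r^3*s^4 +
  (413808)*p^4*q^1*r^4*s^3 +
  (74736)*p^4*q^1*r^5*s^2 +
  (4320)*p^4*q^1*r^6*s^1 +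
  (613200)*p^4*q^2*s^6 +
  (2420136)*p^4*q^2*r^1*s^5 +
  (3530592)*p^4*q^2*r^2*s^4 +
  (2320392)*p^4*q^2*r^3*s^3 +
  (677520)*p^4*q^2*r^4*s^2 +
  (74736)*p^4*q^2*r^5*s^1 +
  (2160)*p^4*q^2*r^6 +
  (1613424)*p^4*q^3*s^5 +
  (5083488)*p^4*q^3*r^1*s^4 +
  (5616768)*p^4*q^3*r^2*s^3 +
  (2569464)*p^4*q^3*r^3*s^2 +
  (440496)*p^4*q^3*r^4*s^1 +
  (19152)*p^4*q^3*r^5 +
  (2541744)*p^4*q^4*s^4 +
  (6104760)*p^4*q^4*r^1*s^3 +
  (4694472)*p^4*q^4*r^2*s^2 +
  (1232640)*p^4*q^4*r^3*s^1 +
  (70092)*p^4*q^4*r^4 +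
  (2441904)*p^4*q^5*s^3 +
  (4091688)*p^4*q^5*r^1*s^2 +
  (1786320)*p^4*q^5*r^2*s^1 +
  (138240)*p^4*q^5*r^3 +
  (1363896)*p^4*q^6*s^2 +
  (1293264)*p^4*q^6*r^1*s^1 +
  (155448)*p^4*q^6*r^2 +
  (369504)*p^4*q^7*s^1 +
  (93744)*p^4*q^7*r^1 +
  (23436)*p^4*q^8 +
  (20592)*p^5*s^7 +
  (98664)*p^5*r^1*s^6 +
  (181872)*p^5*r^2*s^5 +
  (161088)*p^5*r^3*s^4 +
  (68496)*p^5*r^4*s^3 +
  (13104)*p^5*r^5*s^2 +
  (864)*p^5*r^6*s^1 +
  (197328)*p^5*q^1*s^6 +
  (773856)*p^5*q^1*r^1*s^5 +
  (1128888)*p^5*q^1*r^2*s^4 +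
  (747024)*p^5*q^1*r^3*s^3 +
  (223488)*p^5*q^1*r^4*s^2 +
  (26208)*p^5*q^1*r^5*s^1 +
  (864)*p^5*q^1*r^6 +
  (773856)*p^5*q^2*s^5 +
  (2420136)*p^5*q^2*r^1*s^4 +
  (2666304)*p^5*q^2*r^2*s^3 +
  (1226232)*p^5*q^2*r^3*s^2 +
  (213408)*p^5*q^2*r^4*s^1 +
  (9648)*p^5*q^2*r^5 +
  (1613424)*p^5*q^3*s^4 +
  (3838560)*p^5*q^3*r^1*s^3 +
  (2932128)*p^5*q^3*r^2*s^2 +
  (764928)*p^5*q^3*r^3*s^1 +
  (42336)*p^5*q^3*r^4 +
  (1919280)*p^5*q^4*s^3 +
  (3171960)*p^5*q^4*r^1*s^2 +
  (1358784)*p^5*q^4*r^2*s^1 +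
  (97200)*p^5*q^4*r^3 +
  (1268784)*p^5*q^5*s^2 +
  (1171584)*p^5*q^5*r^1*s^1 +
  (125568)*p^5*q^5*r^2 +
  (390528)*p^5*q^6*s^1 +
  (86688)*p^5*q^6*r^1 +
  (24768)*p^5*q^7 +
  (25308)*p^6*s^6 +
  (98664)*p^6*r^1*s^5 +
  (144192)*p^6*r^2*s^4 +
  (95952)*p^6*r^3*s^3 +
  (29328)*p^6*r^4*s^2 +
  (3504)*p^6*r^5*s^1 +
  (197328)*p^6*q^1*s^5 +
  (613200)*p^6*q^1*r^1*s^4 +
  (674904)*p^6*q^1*r^2*s^3 +
  (311280)*p^6*q^1*r^3*s^2 +
  (53376)*p^6*q^1*r^4*s^1 +
  (2352)*p^6*q^1*r^5 +
  (613200)*p^6*q^2*s^4 +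
  (1449000)*p^6*q^2*r^1*s^3 +
  (1104264)*p^6*q^2*r^2*s^2 +
  (284376)*p^6*q^2*r^3*s^1 +
  (15264)*p^6*q^2*r^4 +
  (966000)*p^6*q^3*s^3 +
  (1585968)*p^6*q^3*r^1*s^2 +
  (673824)*p^6*q^3*r^2*s^1 +
  (46920)*p^6*q^3*r^3 +
  (792984)*p^6*q^4*s^2 +
  (726360)*p^6*q^4*r^1*s^1 +
  (76200)*p^6*q^4*r^2 +
  (290544)*p^6*q^5*s^1 +
  (63288)*p^6*q^5*r^1 +
  (21096)*p^6*q^6 +
  (20592)*p^7*s^5 +
  (63528)*p^7*r^1*s^4 +
  (69312)*p^7*r^2*s^3 +
  (31056)*p^7*r^3*s^2 +
  (4368)*p^7*r^4*s^1 +
  (48)*p^7*r^5 +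
  (127056)*p^7*q^1*s^4 +
  (298272)*p^7*q^1*r^1*s^3 +
  (225144)*p^7*q^1*r^2*s^2 +
  (54288)*p^7*q^1*r^3*s^1 +
  (2256)*p^7*q^1*r^4 +
  (298272)*p^7*q^2*s^3 +
  (489096)*p^7*q^2*r^1*s^2 +
  (205056)*p^7*q^2*r^2*s^1 +
  (13800)*p^7*q^2*r^3 +
  (326064)*p^7*q^3*s^2 +
  (301536)*p^7*q^3*r^1*s^1 +
  (33600)*p^7*q^3*r^2 +
  (150768)*p^7*q^4*s^1 +
  (36600)*p^7*q^4*r^1 +
  (14640)*p^7*q^5 +
  (10953)*p^8*s^4 +
  (25476)*p^8*r^1*s^3 +
  (18648)*p^8*r^2*s^2 +
  (3624)*p^8*r^3*s^1 +
  (50952)*p^8*q^1*s^3 +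
  (83700)*p^8*q^1*r^1*s^2 +
  (33696)*p^8*q^1*r^2*s^1 +
  (1896)*p^8*q^1*r^3 +
  (83700)*p^8*q^2*s^2 +
  (79344)*p^8*q^2*r^1*s^1 +
  (9648)*p^8*q^2*r^2 +
  (52896)*p^8*q^3*s^1 +
  (15504)*p^8*q^3*r^1 +
  (7752)*p^8*q^4 +
  (3624)*p^9*s^3 +
  (5964)*p^9*r^1*s^2 +
  (2136)*p^9*r^2*s^1 +
  (24)*p^9*r^3 +
  (11928)*p^9*q^1*s^2 +
  (11760)*p^9*q^1*r^1*s^1 +
  (1464)*p^9*q^1*r^2 +
  (11760)*p^9*q^2*s^1 +
  (4248)*p^9*q^2*r^1 +
  (2832)*p^9*q^3 +
  (702)*p^10*s^2 +
  (732)*p^10*r^1*s^1 +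
  (1464)*p^10*q^1*s^1 +
  (636)*p^10*q^1*r^1 +
  (636)*p^10*q^2 +
  (72)*p^11*s^1 +
  (36)*p^11*r^1 +
  (72)*p^11*q^1 +
  r^2*s^6*QF (72) (-12) (144) (s^2) (r^2) +
  p^6*r^2*QF (72) (-12) (144) (p^2) (r^2)).

Lemma QF_nonneg u v : 0 <= QF 72 (-12) 144 u v.
Proof. unfold QF. nra. Qed.

Lemma Mq_eq p q r s : mA (V2q p q r s) (X6q p q r s) (Y6q p q r s) (XX12q p q r s) (YY12q p q r s) (XY24q p q r s) = Mq p q r s.
Proof. unfold mA, V2q, X6q, Y6q, XX12q, YY12q, XY24q, Mq. ring. Qed.
Lemma N2q_eq p q r s : n2A (V2q p q r s) (X6q p q r s) (Y6q p q r s) (XX12q p q r s) (YY12q p q r s) (XY24q p q r s) (Lpq p q r s) (BXpq p q r s) (BYpq p q r s) = N2q p q r s.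
Proof. unfold n2A, V2q, X6q, Y6q, XX12q, YY12q, XY24q, Lpq, BXpq, BYpq, N2q. ring. Qed.
Lemma Rq_eq p q r s : V2q p q r s * Mq p q r s - 32 * N2q p q r s = Rq p q r s.
Proof. unfold V2q, Mq, N2q, Rq, QF. ring. Qed.

Ltac nonneg_sum :=
  repeat (apply Rplus_le_le_0_compat);
  repeat (apply Rmult_le_pos); try apply QF_nonneg; try (apply pow_le); lra.

Ltac strict_pos :=
  apply Rplus_lt_le_0_compat;
  [ apply Rmult_lt_0_compat; [lra | apply pow_lt; lra] | nonneg_sum ].

Lemma V2q_pos p q r s : 0 < p -> 0 <= q -> 0 <= r -> 0 <= s -> 0 < V2q p q r s.
Proof.
  intros. unfold V2q.
  assert (0 <= (1)*s^2 + (2)*r^1*s^1 + (4)*q^1*s^1 + (2)*q^1*r^1 + (2)*q^2 + (4)*p^1*s^1 + (2)*p^1*r^1 + (4)*p^1*q^1) by nonneg_sum.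
  assert (0 < (1)*p^2) by (apply Rmult_lt_0_compat; [lra|apply pow_lt; lra]).
  lra.
Qed.
Lemma Mq_pos p q r s : 0 < p -> 0 <= q -> 0 <= r -> 0 <= s -> 0 < Mq p q r s.
Proof. intros. unfold Mq. strict_pos. Qed.
Lemma Rq_pos p q r s : 0 < p -> 0 <= q -> 0 <= r -> 0 <= s -> 0 < Rq p q r s.
Proof. intros. unfold Rq. strict_pos. Qed.

Definition mAB a b1 b2 b3 :=
  mA (V2 a b1 b2 b3) (X6 a b1 b2 b3) (Y6 a b1 b2 b3) (XX12 a b1 b2 b3) (YY12 a b1 b2 b3) (XY24 a b1 b2 b3).
Definition rrAB a b1 b2 b3 :=
  V2 a b1 b2 b3 * mAB a b1 b2 b3 - 32 * n2A (V2 a b1 b2 b3) (X6 a b1 b2 b3) (Y6 a b1 b2 b3)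
    (XX12 a b1 b2 b3) (YY12 a b1 b2 b3) (XY24 a b1 b2 b3) (Lp a b1 b2 b3) (BXp a b1 b2 b3) (BYp a b1 b2 b3).
Definition Good a b1 b2 b3 := 0 < V2 a b1 b2 b3 /\ 0 < mAB a b1 b2 b3 /\ 0 < rrAB a b1 b2 b3.

Lemma Good_pqrs p q r s : 0 < p -> 0 <= q -> 0 <= r -> 0 <= s ->
  Good (2*p+2*q+r+s) (p+q+r) (p+q) p.
Proof.
  intros Hp Hq Hr Hs. unfold Good, rrAB, mAB.
  rewrite V2_pqrs, X6_pqrs, Y6_pqrs, XX12_pqrs, YY12_pqrs, XY24_pqrs, Lp_pqrs, BXp_pqrs, BYp_pqrs.
  rewrite Mq_eq, N2q_eq, Rq_eq.
  split; [apply V2q_pos|split; [apply Mq_pos|apply Rq_pos]]; auto.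
Qed.

Lemma Good_ordered a b1 b2 b3 : 0 < b3 -> b3 <= b2 -> b2 <= b1 -> b1 + b2 < a -> Good a b1 b2 b3.
Proof.
  intros H3 H32 H21 Ha.
  pose proof (Good_pqrs b3 (b2 - b3) (b1 - b2) (a - b1 - b2)) as G.
  replace (2 * b3 + 2 * (b2 - b3) + (b1 - b2) + (a - b1 - b2)) with a in G by ring.
  replace (b3 + (b2 - b3) + (b1 - b2)) with b1 in G by ring.
  replace (b3 + (b2 - b3)) with b2 in G by ring.
  apply G; lra.
Qed.

Lemma mA_T12 a v x y xx yy xy :
  mA v (3*a*v - x - y) y (6*a^2*v + xx + yy + xy - 4*a*x - 4*a*y) yy (4*a*y - xy - 2*yy) = mA v x y xx yy xy.
Proof. unfold mA. ring. Qed.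
Lemma n2A_T12 a v x y xx yy xy l bx bY :
  n2A v (3*a*v - x - y) y (6*a^2*v + xx + yy + xy - 4*a*x - 4*a*y) yy (4*a*y - xy - 2*yy) l (a*l - bx - bY) bY
  = n2A v x y xx yy xy l bx bY.
Proof. unfold n2A. ring. Qed.
Lemma mA_T23 v x y xx yy xy : mA v y x yy xx xy = mA v x y xx yy xy.
Proof. unfold mA. ring. Qed.
Lemma n2A_T23 v x y xx yy xy l bx bY : n2A v y x yy xx xy l bY bx = n2A v x y xx yy xy l bx bY.
Proof. unfold n2A. ring. Qed.
Lemma V2_s12 a b1 b2 b3 : V2 a b2 b1 b3 = V2 a b1 b2 b3.
Proof. unfold BXp, BYp, Lp, V2, X6, XX12, XY24, Y6, YY12. ring. Qed.
Lemma X6_s12 a b1 b2 b3 : X6 a b2 b1 b3 = 3*a*V2 a b1 b2 b3 - X6 a b1 b2 b3 - Y6 a b1 b2 b3.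
Proof. unfold BXp, BYp, Lp, V2, X6, XX12, XY24, Y6, YY12. ring. Qed.
Lemma Y6_s12 a b1 b2 b3 : Y6 a b2 b1 b3 = Y6 a b1 b2 b3.
Proof. unfold BXp, BYp, Lp, V2, X6, XX12, XY24, Y6, YY12. ring. Qed.
Lemma XX12_s12 a b1 b2 b3 : XX12 a b2 b1 b3 = 6*a^2*V2 a b1 b2 b3 + XX12 a b1 b2 b3 + YY12 a b1 b2 b3 + XY24 a b1 b2 b3 - 4*a*X6 a b1 b2 b3 - 4*a*Y6 a b1 b2 b3.
Proof. unfold BXp, BYp, Lp, V2, X6, XX12, XY24, Y6, YY12. ring. Qed.
Lemma YY12_s12 a b1 b2 b3 : YY12 a b2 b1 b3 = YY12 a b1 b2 b3.
Proof. unfold BXp, BYp, Lp, V2, X6, XX12, XY24, Y6, YY12. ring. Qed.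
Lemma XY24_s12 a b1 b2 b3 : XY24 a b2 b1 b3 = 4*a*Y6 a b1 b2 b3 - XY24 a b1 b2 b3 - 2*YY12 a b1 b2 b3.
Proof. unfold BXp, BYp, Lp, V2, X6, XX12, XY24, Y6, YY12. ring. Qed.
Lemma Lp_s12 a b1 b2 b3 : Lp a b2 b1 b3 = Lp a b1 b2 b3.
Proof. unfold BXp, BYp, Lp, V2, X6, XX12, XY24, Y6, YY12. ring. Qed.
Lemma BXp_s12 a b1 b2 b3 : BXp a b2 b1 b3 = a*Lp a b1 b2 b3 - BXp a b1 b2 b3 - BYp a b1 b2 b3.
Proof. unfold BXp, BYp, Lp, V2, X6, XX12, XY24, Y6, YY12. ring. Qed.
Lemma BYp_s12 a b1 b2 b3 : BYp a b2 b1 b3 = BYp a b1 b2 b3.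
Proof. unfold BXp, BYp, Lp, V2, X6, XX12, XY24, Y6, YY12. ring. Qed.
Lemma V2_s23 a b1 b2 b3 : V2 a b1 b3 b2 = V2 a b1 b2 b3.
Proof. unfold V2. ring. Qed.
Lemma X6_s23 a b1 b2 b3 : X6 a b1 b3 b2 = Y6 a b1 b2 b3.
Proof. unfold X6, Y6. ring. Qed.
Lemma Y6_s23 a b1 b2 b3 : Y6 a b1 b3 b2 = X6 a b1 b2 b3.
Proof. unfold X6, Y6. ring. Qed.
Lemma XX12_s23 a b1 b2 b3 : XX12 a b1 b3 b2 = YY12 a b1 b2 b3.
Proof. unfold XX12, YY12. ring. Qed.
Lemma YY12_s23 a b1 b2 b3 : YY12 a b1 b3 b2 = XX12 a b1 b2 b3.
Proof. unfold XX12, YY12. ring. Qed.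
Lemma XY24_s23 a b1 b2 b3 : XY24 a b1 b3 b2 = XY24 a b1 b2 b3.
Proof. unfold XY24. ring. Qed.
Lemma Lp_s23 a b1 b2 b3 : Lp a b1 b3 b2 = Lp a b1 b2 b3.
Proof. unfold Lp. ring. Qed.
Lemma BXp_s23 a b1 b2 b3 : BXp a b1 b3 b2 = BYp a b1 b2 b3.
Proof. unfold BXp, BYp. ring. Qed.
Lemma BYp_s23 a b1 b2 b3 : BYp a b1 b3 b2 = BXp a b1 b2 b3.
Proof. unfold BXp, BYp. ring. Qed.

Lemma Good_sym12 a b1 b2 b3 : Good a b2 b1 b3 -> Good a b1 b2 b3.
Proof.
  unfold Good, rrAB, mAB.
  rewrite (V2_s12 a b1 b2 b3), (X6_s12 a b1 b2 b3), (Y6_s12 a b1 b2 b3), (XX12_s12 a b1 b2 b3), (YY12_s12 a b1 b2 b3), (XY24_s12 a b1 b2 b3), (Lp_s12 a b1 b2 b3), (BXp_s12 a b1 b2 b3), (BYp_s12 a b1 b2 b3).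
  rewrite mA_T12, n2A_T12. auto.
Qed.
Lemma Good_sym23 a b1 b2 b3 : Good a b1 b3 b2 -> Good a b1 b2 b3.
Proof.
  unfold Good, rrAB, mAB.
  rewrite (V2_s23 a b1 b2 b3), (X6_s23 a b1 b2 b3), (Y6_s23 a b1 b2 b3), (XX12_s23 a b1 b2 b3), (YY12_s23 a b1 b2 b3), (XY24_s23 a b1 b2 b3), (Lp_s23 a b1 b2 b3), (BXp_s23 a b1 b2 b3), (BYp_s23 a b1 b2 b3).
  rewrite mA_T23, n2A_T23. auto.
Qed.

Lemma Good_cone a b1 b2 b3 : kahler_cone a b1 b2 b3 -> Good a b1 b2 b3.
Proof.
  intros (h1 & h2 & h3 & h12 & h13 & h23).
  destruct (Rle_lt_dec b2 b1); destruct (Rle_lt_dec b3 b2); destruct (Rle_lt_dec b3 b1).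
  - apply Good_ordered; lra.
  - lra.
  - apply Good_sym23. apply Good_ordered; lra.
  - apply Good_sym23, Good_sym12. apply Good_ordered; lra.
  - apply Good_sym12. apply Good_ordered; lra.
  - apply Good_sym12, Good_sym23. apply Good_ordered; lra.
  - lra.
  - apply Good_sym12, Good_sym23, Good_sym12. apply Good_ordered; lra.
Qed.

Lemma area_ext (a b1 b2 b3 c0 c1 c2 c3 c4 c5 : R) (f : R -> R -> R) :
  kahler_cone a b1 b2 b3 ->
  (forall x y, f x y = c0 + c1 * x + c2 * y + c3 * x ^ 2 + c4 * y ^ 2 + c5 * x * y) ->
  hex_area_int a b1 b2 b3 f
  = c0 * Vp a b1 b2 b3 + c1 * Xp a b1 b2 b3 + c2 * Yp a b1 b2 b3
    + c3 * XXp a b1 b2 b3 + c4 * YYp a b1 b2 b3 + c5 * XYp a b1 b2 b3.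
Proof.
  intros Hk Hf.
  replace f with (fun x y => c0 + c1 * x + c2 * y + c3 * x ^ 2 + c4 * y ^ 2 + c5 * x * y).
  - apply area_quad; auto.
  - apply functional_extensionality; intro x; apply functional_extensionality; intro y; auto.
Qed.

Lemma bdry_ext (a b1 b2 b3 d0 d1 d2 : R) (f : R -> R -> R) :
  (forall x y, f x y = d0 + d1 * x + d2 * y) ->
  hex_bdry_int a b1 b2 b3 f = d0 * Lp a b1 b2 b3 + d1 * BXp a b1 b2 b3 + d2 * BYp a b1 b2 b3.
Proof.
  intros Hf.
  replace f with (fun x y => d0 + d1 * x + d2 * y).
  - apply bdry_aff.
  - apply functional_extensionality; intro x; apply functional_extensionality; intro y; auto.
Qed.

Definition GA' a b1 b2 b3 := Vp a b1 b2 b3 * XXp a b1 b2 b3 - Xp a b1 b2 b3 ^ 2.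
Definition GB' a b1 b2 b3 := Vp a b1 b2 b3 * YYp a b1 b2 b3 - Yp a b1 b2 b3 ^ 2.
Definition GC' a b1 b2 b3 := Vp a b1 b2 b3 * XYp a b1 b2 b3 - Xp a b1 b2 b3 * Yp a b1 b2 b3.
Definition f1' a b1 b2 b3 := Vp a b1 b2 b3 * BXp a b1 b2 b3 - Lp a b1 b2 b3 * Xp a b1 b2 b3.
Definition f2' a b1 b2 b3 := Vp a b1 b2 b3 * BYp a b1 b2 b3 - Lp a b1 b2 b3 * Yp a b1 b2 b3.

Theorem lemmaB1 : forall a b1 b2 b3 : R,
  kahler_cone a b1 b2 b3 -> calB a b1 b2 b3 < 1 / 4.
Proof.
  intros a b1 b2 b3 Hk.
  destruct (Good_cone a b1 b2 b3 Hk) as (HV2 & HM & HR).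
  set (k := (2 * PI) ^ 2).
  assert (Hk0 : 0 < k) by (unfold k; apply pow_lt; pose proof PI_RGT_0; lra).
  assert (HV : 0 < Vp a b1 b2 b3) by (unfold Vp; lra).
  set (V := Vp a b1 b2 b3) in *.
  assert (Hvol : volume a b1 b2 b3 = k * V).
  { unfold volume, int_mu. fold k. rewrite (area_ext a b1 b2 b3 1 0 0 0 0 0) by (auto; intros; ring).
    unfold V; ring. }
  assert (HX : int_mu a b1 b2 b3 (fun x _ => x) = k * Xp a b1 b2 b3).
  { unfold int_mu. fold k. rewrite (area_ext a b1 b2 b3 0 1 0 0 0 0) by (auto; intros; ring). ring. }
  assert (HY : int_mu a b1 b2 b3 (fun _ y => y) = k * Yp a b1 b2 b3).
  { unfold int_mu. fold k. rewrite (area_ext a b1 b2 b3 0 0 1 0 0 0) by (auto; intros; ring). ring. }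
  assert (Hx0 : x0 a b1 b2 b3 = Xp a b1 b2 b3 / V).
  { unfold x0. rewrite HX, Hvol. field. split; lra. }
  assert (Hy0 : y0 a b1 b2 b3 = Yp a b1 b2 b3 / V).
  { unfold y0. rewrite HY, Hvol. field. split; lra. }
  assert (HA : Agram a b1 b2 b3 = k * GA' a b1 b2 b3 / V).
  { unfold Agram, int_mu. fold k.
    rewrite (area_ext a b1 b2 b3 (x0 a b1 b2 b3 ^ 2) (-2 * x0 a b1 b2 b3) 0 1 0 0) by (auto; intros; ring).
    rewrite Hx0. unfold GA'. fold V. field. lra. }
  assert (HB : Bgram a b1 b2 b3 = k * GB' a b1 b2 b3 / V).
  { unfold Bgram, int_mu. fold k.
    rewrite (area_ext a b1 b2 b3 (y0 a b1 b2 b3 ^ 2) 0 (-2 * y0 a b1 b2 b3) 0 1 0) by (auto; intros; ring).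
    rewrite Hy0. unfold GB'. fold V. field. lra. }
  assert (HC : Cgram a b1 b2 b3 = k * GC' a b1 b2 b3 / V).
  { unfold Cgram, int_mu. fold k.
    rewrite (area_ext a b1 b2 b3 (x0 a b1 b2 b3 * y0 a b1 b2 b3) (- y0 a b1 b2 b3) (- x0 a b1 b2 b3) 0 0 1)
      by (auto; intros; ring).
    rewrite Hx0, Hy0. unfold GC'. fold V. field. lra. }
  assert (Hs0 : s0 a b1 b2 b3 = 2 * Lp a b1 b2 b3 / V).
  { unfold s0, int_s_mu. rewrite Hvol. fold k.
    rewrite (bdry_ext a b1 b2 b3 1 0 0) by (intros; ring). field. split; lra. }
  assert (HF1 : Fut1 a b1 b2 b3 = 2 * k * f1' a b1 b2 b3 / V).
  { unfold Fut1, int_s_mu. fold k. rewrite Hs0, HX.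
    rewrite (bdry_ext a b1 b2 b3 0 1 0) by (intros; ring). unfold f1'. fold V. field. lra. }
  assert (HF2 : Fut2 a b1 b2 b3 = 2 * k * f2' a b1 b2 b3 / V).
  { unfold Fut2, int_s_mu. fold k. rewrite Hs0, HY.
    rewrite (bdry_ext a b1 b2 b3 0 0 1) by (intros; ring). unfold f2'. fold V. field. lra. }
  unfold calB. rewrite HA, HB, HC, HF1, HF2.
  assert (HPI : PI <> 0) by (pose proof PI_RGT_0; lra).
  unfold GA', GB', GC', f1', f2', V, k. unfold Vp, Xp, Yp, XXp, YYp, XYp.
  unfold Good, rrAB, mAB in *.
  set (v := V2 a b1 b2 b3) in *. set (x := X6 a b1 b2 b3) in *. set (y := Y6 a b1 b2 b3) in *.
  set (xx := XX12 a b1 b2 b3) in *. set (yy := YY12 a b1 b2 b3) in *. set (xy := XY24 a b1 b2 b3) in *.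
  set (l := Lp a b1 b2 b3) in *. set (bx := BXp a b1 b2 b3) in *. set (bY := BYp a b1 b2 b3) in *.
  set (mm := mA v x y xx yy xy) in *.
  set (rr := v * mm - 32 * n2A v x y xx yy xy l bx bY) in *.
  match goal with |- ?L < _ => assert (E : L = 1/4 - rr / (4 * v * mm)) end.
  { assert (HM' : 0 < mA v x y xx yy xy) by exact HM.
    unfold rr, mm, n2A. unfold mA in *. field.
    assert (0 < PI ^ 4) by (apply pow_lt; pose proof PI_RGT_0; lra).
    split; [lra|split; [lra|split; [|exact HPI]]].
    match goal with |- ?e <> 0 =>
      replace e with (64 * 746496 * 144 * PI ^ 4 * (v * (-24 * y ^ 2 * xx + 24 * x * y * xy + -24 * x ^ 2 * yy + -9 * v * xy ^ 2 + 36 * v * xx * yy))) by ring end.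
    apply Rgt_not_eq. apply Rmult_lt_0_compat; [apply Rmult_lt_0_compat; [lra|assumption]|apply Rmult_lt_0_compat; lra]. }
  rewrite E.
  assert (0 < rr / (4 * v * mm)).
  { apply Rdiv_lt_0_compat; [lra|]. apply Rmult_lt_0_compat; [lra|assumption]. }
  lra.
Qed.
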